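(* Let $n\ge 4$ and let $X$ be a real $2\times n$ matrix with $\Delta_{i,j}(X)>0$ for all $1\le i<j\le n$. Then for all integers $1\le j<k<l\le n-1$, $$D_k D_{l-j}\ \ge\ D_j D_{l-k}+D_l D_{k-j}.$$
   Context: $\Delta_{i,j}(X)$ is the determinant of the $2\times2$ submatrix of columns $i,j$ of $X$. Let $\sigma$ act on strictly increasing pairs $(i,j)$, $1\le i<j\le n$, by $\sigma(i,j)=(i+1,j+1)$ if $j<n$ and $\sigma(i,n)=(1,i+1)$. For $k\in\{1,\dots,n-1\}$, $D_k=\left(\prod_{m=0}^{n-1}\Delta_{\sigma^m(1,k+1)}(X)\right)^{1/n}$ (geometric mean over the orbit $O_k=\{\sigma^m(1,k+1)\}$). *)

(* Defs.v *)
From HB Require Import structures.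
From mathcomp Require Import all_boot all_order all_algebra.
From mathcomp Require Import reals exp.
Set Implicit Arguments. Unset Strict Implicit. Unset Printing Implicit Defensive.
Import Order.TTheory GRing.Theory Num.Theory.
Local Open Scope ring_scope.

Section Minors.
Variables (R : realType) (n : nat).

(* Entry of X in row a and column i, with columns numbered 1..n as in the
   paper (0 outside the range, never used under the hypotheses). *)
Definition mxcol (X : 'M[R]_(2, n)) (a : 'I_2) (i : nat) : R :=
  match @insub nat (fun k => k < n)%N 'I_n i.-1 with
  | Some c => X a c
  | None => 0
  end.

Definition Delta (X : 'M[R]_(2, n)) (p : nat * nat) : R :=
  \det (\matrix_(a < 2, b < 2) mxcol X a (if b == 0 :> nat then p.1 else p.2)).

Definition sigma (p : nat * nat) : nat * nat :=
  if (p.2 < n)%N then (p.1.+1, p.2.+1) else (1%N, p.1.+1).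

Definition Dk (X : 'M[R]_(2, n)) (k : nat) : R :=
  powR (\prod_(m < n) Delta X (iter m sigma (1%N, k.+1))) (n%:R^-1).

End Minors.

(* Main.v *)
Require Import Defs.
From HB Require Import structures.
From mathcomp Require Import all_boot all_order all_algebra.
From mathcomp Require Import reals exp.
From mathcomp Require Import zify ring lra.
Import Order.TTheory GRing.Theory Num.Theory.
Local Open Scope ring_scope.

Definition xc (R : realType) (n : nat) (X : 'M[R]_(2, n)) (a : 'I_2) (t : nat) : R :=
  (-1) ^+ (t %/ n) * Defs.mxcol X a (t %% n).+1.
Arguments xc {R n}.

Definition EE (R : realType) (n : nat) (X : 'M[R]_(2, n)) (t k : nat) : R :=
  xc X 0 t * xc X 1 (t + k) - xc X 0 (t + k) * xc X 1 t.
Arguments EE {R n}.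

Lemma xc_shift (R : realType) (n : nat) (X : 'M[R]_(2, n)) a t : (0 < n)%N ->
  xc X a (t + n) = - xc X a t.
Proof.
move=> n0; rewrite /xc.
have -> : (t + n = 1 * n + t)%N by rewrite mul1n addnC.
by rewrite divnMDl // modnMDl exprS mulN1r mulNr.
Qed.

Lemma EE_shift (R : realType) (n : nat) (X : 'M[R]_(2, n)) t k : (0 < n)%N ->
  EE X (t + n) k = EE X t k.
Proof.
move=> n0; rewrite /EE.
have -> : (t + n + k = (t + k) + n)%N by rewrite addnAC.
by rewrite !xc_shift // !mulrNN.
Qed.

Lemma EE_shiftq (R : realType) (n : nat) (X : 'M[R]_(2, n)) t q k : (0 < n)%N ->
  EE X (t + q * n) k = EE X t k.
Proof.
move=> n0; elim: q => [|q IH]; first by rewrite mul0n addn0.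
by rewrite mulSn addnCA addnC EE_shift // addnC.
Qed.

Lemma prod_period (R : realType) (n : nat) (f : nat -> R) : (0 < n)%N ->
  (forall m, f (m + n)%N = f m) ->
  forall s, \prod_(m < n) f (m + s)%N = \prod_(m < n) f m.
Proof.
move=> n0 fp; elim=> [|s IH]; first by apply: eq_bigr => i _; rewrite addn0.
rewrite -IH; case: n n0 fp {IH} => // n' _ fp.
rewrite [LHS]big_ord_recr [RHS]big_ord_recl /=.
rewrite mulrC; congr (_ * _).
  by rewrite add0n -addSnnS addnC fp.
by apply: eq_bigr => i _; rewrite /bump /= add1n addSnnS.
Qed.

Lemma mxcol_small (R : realType) (n : nat) (X : 'M[R]_(2, n)) a t : (t < n)%N ->
  xc X a t = Defs.mxcol X a t.+1.
Proof. by move=> tn; rewrite /xc divn_small // modn_small // expr0 mul1r. Qed.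

Lemma mxcol_big (R : realType) (n : nat) (X : 'M[R]_(2, n)) a t : (n <= t)%N -> (t < n + n)%N ->
  xc X a t = - Defs.mxcol X a (t - n).+1.
Proof.
move=> nt tn; rewrite /xc.
have -> : (t = 1 * n + (t - n))%N by rewrite mul1n subnKC.
rewrite divnMDl ?modnMDl ?divn_small ?modn_small; try lia.
  by rewrite mul1n addKn expr1 mulN1r.
Qed.

Lemma iter_sigma (n k m : nat) : (0 < k)%N -> (k < n)%N -> (m < n)%N ->
  iter m (sigma n) (1%N, k.+1) =
  if (m + k < n)%N then (m.+1, (m + k).+1) else ((m + k).+1 - n, m.+1)%N.
Proof.
move=> k0 kn; elim: m => [|m IH] mn; first by rewrite add0n kn.
rewrite iterS IH; last by lia.
case: (ltnP (m + k) n) => h1; rewrite /sigma /=;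
repeat (case: ifP => ? /=).
all: first [by congr pair; lia | exfalso; lia].
Qed.

Lemma det22 (R : comRingType) (A : 'M[R]_2) : \det A = A 0 0 * A 1 1 - A 0 1 * A 1 0.
Proof.
rewrite (expand_det_row _ 0) !big_ord_recl big_ord0 /cofactor !det_mx11 /=.
rewrite !mxE /=.
rewrite addr0 expr0 mul1r expr1 mulN1r mulrN.
by congr (A _ _ * A _ _ - A _ _ * A _ _); apply/val_inj.
Qed.

Lemma DeltaE (R : realType) (n : nat) (X : 'M[R]_(2, n)) i j :
  Defs.Delta X (i, j) = Defs.mxcol X 0 i * Defs.mxcol X 1 j - Defs.mxcol X 0 j * Defs.mxcol X 1 i.
Proof.
rewrite /Delta det22 !mxE.
have -> : ((0 : 'I_2) == 0 :> nat) = true by [].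
have -> : ((1 : 'I_2) == 0 :> nat) = false by [].
by [].
Qed.


Lemma EE_small (R : realType) (n : nat) (X : 'M[R]_(2, n)) r k : (r + k < n)%N ->
  EE X r k = Delta X (r.+1, (r + k).+1).
Proof.
move=> h; rewrite DeltaE /EE !mxcol_small //; lia.
Qed.

Lemma EE_big (R : realType) (n : nat) (X : 'M[R]_(2, n)) r k : (r < n)%N -> (k < n)%N ->
  (n <= r + k)%N ->
  EE X r k = Delta X ((r + k - n).+1, r.+1).
Proof.
move=> h1 h2 h3; rewrite DeltaE /EE [xc X 0 r]mxcol_small // [xc X 1 r]mxcol_small // !mxcol_big //; try lia.
ring.
Qed.

Lemma Delta_orbit (R : realType) (n : nat) (X : 'M[R]_(2, n)) k m :
  (0 < k)%N -> (k < n)%N -> (m < n)%N ->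
  Delta X (iter m (sigma n) (1%N, k.+1)) = EE X m k.
Proof.
move=> k0 kn mn; rewrite iter_sigma //.
case: ltnP => h; first by rewrite EE_small.
by rewrite EE_big // subSn.
Qed.

Lemma EE_pos (R : realType) (n : nat) (X : 'M[R]_(2, n)) :
  (forall i j : nat, (1 <= i)%N -> (i < j)%N -> (j <= n)%N -> 0 < Delta X (i, j)) ->
  forall t k, (0 < k)%N -> (k < n)%N -> 0 < EE X t k.
Proof.
move=> H t k k0 kn.
have n0 : (0 < n)%N by lia.
have -> : EE X t k = EE X (t %% n) k by rewrite {1}(divn_eq t n) addnC EE_shiftq.
have rn : (t %% n < n)%N by rewrite ltn_pmod.
case: (ltnP (t %% n + k) n) => h.
  rewrite EE_small //; apply: H; lia.
rewrite EE_big //; apply: H; lia.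
Qed.

Lemma plucker (R : realType) (n : nat) (X : 'M[R]_(2, n)) t j k l :
  (j <= k)%N -> (k <= l)%N ->
  EE X t k * EE X (t + j) (l - j) =
  EE X t j * EE X (t + k) (l - k) + EE X t l * EE X (t + j) (k - j).
Proof.
move=> jk kl; rewrite /EE.
have e1 : (t + j + (l - j) = t + l)%N by lia.
have e2 : (t + k + (l - k) = t + l)%N by lia.
have e3 : (t + j + (k - j) = t + k)%N by lia.
rewrite e1 e2 e3; ring.
Qed.

Lemma prodEE_shift (R : realType) (n : nat) (X : 'M[R]_(2, n)) c s : (0 < n)%N ->
  \prod_(m < n) EE X (m + s) c = \prod_(m < n) EE X m c.
Proof.
move=> n0; apply: (@prod_period R n (fun m => EE X m c)) => // m; exact: EE_shift.
Qed.

Lemma DkE (R : realType) (n : nat) (X : 'M[R]_(2, n)) c : (0 < c)%N -> (c < n)%N ->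
  Dk X c = powR (\prod_(m < n) EE X m c) (n%:R^-1).
Proof.
move=> c0 cn; rewrite /Dk; congr powR; apply: eq_bigr => m _.
exact: Delta_orbit.
Qed.

Lemma powR_rootn (R : realType) (n : nat) (P : R) : (0 < n)%N -> 0 <= P ->
  powR P (n%:R^-1) ^+ n = P.
Proof.
move=> n0 P0; rewrite -powR_mulrn ?powR_ge0 // -powRrM mulVf ?powRr1 //.
by rewrite pnatr_eq0 -lt0n.
Qed.

Lemma AGM_ord (R : realType) (n : nat) (E : 'I_n -> R) : (0 < n)%N ->
  (forall i, 0 <= E i) ->
  powR (\prod_(i < n) E i) (n%:R^-1) <= (\sum_(i < n) E i) / n%:R.
Proof.
move=> n0 E0.
have := @leif_AGM R _ [pred _ : 'I_n | true] E => /=.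
rewrite /= cardE /= size_enum_ord.
move=> /(_ (fun i _ => E0 i)) /leif_le H.
have P0 : 0 <= \prod_(i < n) E i by apply: prodr_ge0.
have S0 : 0 <= (\sum_(i < n) E i) / n%:R.
  by apply: divr_ge0; [apply: sumr_ge0 | apply: ler0n].
rewrite -(ler_pXn2r n0) ?nnegrE ?powR_ge0 // powR_rootn //.
exact: H.
Qed.

Lemma GM_super (R : realType) (n : nat) (a b : nat -> R) : (0 < n)%N ->
  (forall i, 0 < a i) -> (forall i, 0 < b i) ->
  powR (\prod_(i < n) a i) (n%:R^-1) + powR (\prod_(i < n) b i) (n%:R^-1)
  <= powR (\prod_(i < n) (a i + b i)) (n%:R^-1).
Proof.
move=> n0 a0 b0.
set r := n%:R^-1.
have c0 i : 0 < a i + b i by rewrite addr_gt0.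
have Pc0 : 0 < \prod_(i < n) (a i + b i) by apply: prodr_gt0.
pose Gc := powR (\prod_(i < n) (a i + b i)) r.
have Gc0 : 0 < Gc by rewrite /Gc powR_gt0.
have key (f : nat -> R) : (forall i, 0 < f i) ->
   powR (\prod_(i < n) f i) r / Gc <= (\sum_(i < n) (f i / (a i + b i))) / n%:R.
  move=> f0.
  have -> : powR (\prod_(i < n) f i) r =
            powR (\prod_(i < n) (f i / (a i + b i))) r * Gc.
    rewrite /Gc -powRM ?ltW //; last by apply: prodr_gt0 => i _; rewrite divr_gt0.
    rewrite -big_split /=; congr powR; apply: eq_bigr => i _.
    by rewrite divfK // gt_eqF.
  rewrite mulfK ?gt_eqF //.
  apply: AGM_ord => // i; rewrite ltW // divr_gt0 //.
have ka := key a a0; have kb := key b b0.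
have : powR (\prod_(i < n) a i) r / Gc + powR (\prod_(i < n) b i) r / Gc <= 1.
  apply: le_trans (lerD ka kb) _.
  rewrite -mulrDl -big_split /=.
  rewrite (eq_bigr (fun _ => 1)); last by move=> i _; rewrite -mulrDl divff // gt_eqF.
  rewrite sumr_const card_ord divff // pnatr_eq0 -lt0n //.
rewrite -mulrDl ler_pdivrMr // mul1r.
done.
Qed.


Theorem mainTheorem9 (R : realType) (n : nat) (X : 'M[R]_(2, n)) :
  (4 <= n)%N ->
  (forall i j : nat, (1 <= i)%N -> (i < j)%N -> (j <= n)%N -> 0 < Delta X (i, j)) ->
  forall j k l : nat, (1 <= j)%N -> (j < k)%N -> (k < l)%N -> (l <= n.-1)%N ->
    Dk X j * Dk X (l - k) + Dk X l * Dk X (k - j) <= Dk X k * Dk X (l - j).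
Proof.
move=> n4 H j k l j1 jk kl ln.
have n0 : (0 < n)%N by lia.
have pos c t : (0 < c)%N -> (c < n)%N -> 0 < EE X t c by move=> *; apply: EE_pos.
have P0 c : (0 < c)%N -> (c < n)%N -> 0 <= \prod_(m < n) EE X m c.
  by move=> *; apply: prodr_ge0 => i _; apply: ltW; apply: pos.
rewrite !DkE; try lia.
rewrite -!powRM; try (apply: P0; lia).
have eA : \prod_(m < n) EE X m j * \prod_(m < n) EE X m (l - k) =
          \prod_(m < n) (EE X m j * EE X (m + k) (l - k)).
  by rewrite big_split /= prodEE_shift.
have eB : \prod_(m < n) EE X m l * \prod_(m < n) EE X m (k - j) =
          \prod_(m < n) (EE X m l * EE X (m + j) (k - j)).
  by rewrite big_split /= prodEE_shift.
have eC : \prod_(m < n) EE X m k * \prod_(m < n) EE X m (l - j) =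
          \prod_(m < n) (EE X m j * EE X (m + k) (l - k) + EE X m l * EE X (m + j) (k - j)).
  rewrite -(@prodEE_shift _ _ X (l - j) j n0) -big_split /=.
  apply: eq_bigr => m _; apply: plucker; lia.
rewrite eA eB eC.
apply: (@GM_super R n (fun m => EE X m j * EE X (m + k) (l - k))
                 (fun m => EE X m l * EE X (m + j) (k - j))) => // i.
  by rewrite mulr_gt0 // pos //; lia.
by rewrite mulr_gt0 // pos //; lia.
Qed.
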